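(* Assume that $f_a(0)=\lim_{u\downarrow 0}f_a(u)=-\infty$ for every $a\in A$. Let $\theta\in\mathbb R^n$ and let $p^*\in\mathcal M_1^+(A)$ satisfy the variational principle with parameters $\theta$. Then $p^*_a>0$ for all $a\in A$.
   Context: Let $A$ be a finite or countable set and $\mathcal M_1^+(A)$ the set of probability distributions $p=(p_a)_{a\in A}$ on $A$. For each $a\in A$ let $h_a:[0,1]\to\mathbb R$ be continuous and strictly concave with $h_a(0)=h_a(1)=0$, differentiable on $(0,1)$ with $h_a'(u)=-f_a(u)$, where $f_a$ extends to a continuous (necessarily strictly increasing) function on $(0,1]$; put $f_a(0)=\lim_{u\downarrow0}f_a(u)\in[-\infty,\infty)$. The generalised entropy is $I(p)=\sum_{a\in A}h_a(p_a)\in[0,+\infty]$. Let $H_1,\dots,H_n:A\to\mathbb R$ be functions bounded from below, and write $\langle p,X\rangle=\sum_{a}p_aX(a)$. A distribution $p^*\in\mathcal M_1^+(A)$ satisfies the variational principle with parameters $\theta=(\theta_1,\dots,\theta_n)\in\mathbb R^n$ if $+\infty> I(p^* )-\sum_{j=1}^n\theta_j\langle p^*,H_j\rangle\ \ge\ I(p)-\sum_{j=1}^n\theta_j\langle p,H_j\rangle$ for all $p\in\mathcal M_1^+(A)$. *)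

(* Defs.v *)
From Stdlib Require Import Reals.
Open Scope R_scope.

(* The countable (finite or countably infinite) set A is encoded as the
   subset { a : nat | inA a = true } of nat. *)

Fixpoint fsum (n : nat) (g : nat -> R) : R :=
  match n with O => 0 | S k => fsum k g + g k end.

Definition is_distr (inA : nat -> bool) (p : nat -> R) : Prop :=
  (forall a, 0 <= p a) /\ (forall a, inA a = false -> p a = 0) /\
  infinite_sum p 1.

Definition entropy_is (inA : nat -> bool) (h : nat -> R -> R) (p : nat -> R)
  (v : R) : Prop :=
  infinite_sum (fun a => if inA a then h a (p a) else 0) v.

Definition mean_is (p : nat -> R) (X : nat -> R) (v : R) : Prop :=
  infinite_sum (fun a => p a * X a) v.

Definition objective_is (inA : nat -> bool) (h : nat -> R -> R) (n : nat)
  (H : nat -> nat -> R) (theta : nat -> R) (p : nat -> R) (v : R) : Prop :=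
  exists (i : R) (e : nat -> R),
    entropy_is inA h p i /\
    (forall j, (j < n)%nat -> mean_is p (H j) (e j)) /\
    v = i - fsum n (fun j => theta j * e j).

Definition variational_principle (inA : nat -> bool) (h : nat -> R -> R)
  (n : nat) (H : nat -> nat -> R) (theta : nat -> R) (pstar : nat -> R) : Prop :=
  is_distr inA pstar /\
  exists vstar, objective_is inA h n H theta pstar vstar /\
    forall p v, is_distr inA p -> objective_is inA h n H theta p v -> v <= vstar.

Definition strictly_concave_on01 (g : R -> R) : Prop :=
  forall x y t, 0 <= x <= 1 -> 0 <= y <= 1 -> x <> y -> 0 < t < 1 ->
    g (t * x + (1 - t) * y) > t * g x + (1 - t) * g y.

Definition entropy_data (inA : nat -> bool) (h f : nat -> R -> R) : Prop :=
  forall a, inA a = true ->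
    (forall x, 0 <= x <= 1 -> limit1_in (h a) (fun y => 0 <= y <= 1) (h a x) x) /\
    strictly_concave_on01 (h a) /\
    h a 0 = 0 /\ h a 1 = 0 /\
    (forall u, 0 < u < 1 -> derivable_pt_lim (h a) u (- f a u)) /\
    (forall x, 0 < x <= 1 -> limit1_in (f a) (fun y => 0 < y <= 1) (f a x) x).

Definition tends_to_minus_infty_at_0 (g : R -> R) : Prop :=
  forall M, exists delta, delta > 0 /\ forall u, 0 < u < delta -> g u < M.

(* Main.v *)
Require Import Defs.
From Stdlib Require Import Reals Lra Lia Psatz Classical.
Open Scope R_scope.

Definition ind (a : nat) (c : R) : nat -> R := fun k => if Nat.eqb k a then c else 0.

Lemma isum_plus g d l m : infinite_sum g l -> infinite_sum d m ->
  infinite_sum (fun k => g k + d k) (l + m).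
Proof.
  intros Hg Hd. assert (Hc := CV_plus (sum_f_R0 g) (sum_f_R0 d) l m Hg Hd).
  intros eps He. destruct (Hc eps He) as [N HN]. exists N. intros k Hk.
  rewrite plus_sum. apply HN; auto.
Qed.

Lemma isum_ext g g' l : (forall k, g k = g' k) -> infinite_sum g l -> infinite_sum g' l.
Proof.
  intros Hext Hg eps He. destruct (Hg eps He) as [N HN]. exists N. intros k Hk.
  rewrite <- (sum_eq g g'); auto.
Qed.

Lemma sum_ind a c N : (a <= N)%nat -> sum_f_R0 (ind a c) N = c.
Proof.
  induction N; intros Ha.
  - assert (a = 0)%nat by lia. subst. simpl. unfold ind. simpl. reflexivity.
  - destruct (Nat.eq_dec a (S N)).
    + subst. simpl. rewrite (sum_eq _ (fun _ => 0)).
      * rewrite sum_cte. unfold ind. rewrite Nat.eqb_refl. ring.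
      * intros i Hi. unfold ind. destruct (Nat.eqb_spec i (S N)); [lia|auto].
    + simpl. rewrite IHN by lia. unfold ind.
      destruct (Nat.eqb_spec (S N) a); [lia|ring].
Qed.

Lemma isum_ind a c : infinite_sum (ind a c) c.
Proof.
  intros eps He. exists a. intros k Hk. rewrite sum_ind by lia.
  unfold Rdist. replace (c - c) with 0 by ring. rewrite Rabs_R0. lra.
Qed.

Lemma isum_mod g l a0 c0 a1 c1 : infinite_sum g l ->
  infinite_sum (fun k => g k + ind a0 c0 k + ind a1 c1 k) (l + c0 + c1).
Proof.
  intros Hg. apply isum_plus; [apply isum_plus|]; auto; apply isum_ind.
Qed.

Lemma fsum_lin n (th E D : nat -> R) e :
  fsum n (fun j => th j * (E j + e * D j)) =
  fsum n (fun j => th j * E j) + e * fsum n (fun j => th j * D j).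
Proof. induction n; simpl; [ring|]. rewrite IHn. ring. Qed.

Theorem mainTheorem1
  (inA : nat -> bool) (h f : nat -> R -> R) (n : nat)
  (H : nat -> nat -> R) (theta : nat -> R) (pstar : nat -> R) :
  entropy_data inA h f ->
  (forall j, (j < n)%nat -> exists c, forall a, inA a = true -> c <= H j a) ->
  (forall a, inA a = true -> tends_to_minus_infty_at_0 (f a)) ->
  variational_principle inA h n H theta pstar ->
  forall a, inA a = true -> 0 < pstar a.
Proof.
  intros Hed _ Hinf [[Hnn [Hout Hsum]] [vstar [[istar [estar [Hent [Hmean Hv]]]] Hmax]]] a0 Ha0.
  destruct (Rlt_or_le 0 (pstar a0)) as [|Hle]; auto.
  assert (Hz : pstar a0 = 0) by (specialize (Hnn a0); lra).
  exfalso.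
  assert (Hex : exists a1, 0 < pstar a1).
  { apply NNPP. intro Hno.
    assert (Hall : forall a, pstar a = 0).
    { intro a. specialize (Hnn a). destruct (Rlt_or_le 0 (pstar a)); [|lra].
      exfalso. apply Hno. eauto. }
    assert (HS : forall N, sum_f_R0 pstar N = 0).
    { induction N; simpl; [apply Hall|]. rewrite IHN, Hall. ring. }
    destruct (Hsum (1/2)) as [N HN]; [lra|]. specialize (HN N (le_n N)).
    rewrite HS in HN. unfold Rdist in HN. replace (0-1) with (-(1)) in HN by ring.
    rewrite Rabs_Ropp, Rabs_R1 in HN. lra. }
  destruct Hex as [a1 Hp1].
  set (p1 := pstar a1) in *.
  assert (Ha1 : inA a1 = true).
  { destruct (inA a1) eqn:E; auto. unfold p1 in Hp1. rewrite (Hout a1 E) in Hp1. lra. }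
  assert (Hne : a0 <> a1). { intro; subst. unfold p1 in Hp1. lra. }
  assert (Hp1le : p1 <= 1).
  { assert (Hg : Un_growing (sum_f_R0 pstar)).
    { intro k. simpl. specialize (Hnn (S k)). lra. }
    assert (Hb := growing_ineq _ _ Hg Hsum a1).
    destruct a1 as [|k]; simpl in Hb; unfold p1; [lra|].
    assert (0 <= sum_f_R0 pstar k).
    { apply cond_pos_sum. auto. }
    lra. }
  destruct (Hed a0 Ha0) as [_ [Hc0 [Hh00 [_ [Hd0 _]]]]].
  destruct (Hed a1 Ha1) as [_ [Hc1 _]].
  set (K := (2 / p1) * (h a1 (p1/2) - h a1 p1)).
  set (C := fsum n (fun j => theta j * (H j a0 - H j a1))).
  destruct (Hinf a0 Ha0 (- (C - K))) as [delta [Hdel Hfd]].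
  set (e := Rmin delta (Rmin (p1/2) (1/2)) / 2).
  assert (He2 : 0 < e /\ e < delta /\ e < p1 / 2 /\ e < 1/2).
  { unfold e. assert (H1 := Rmin_l delta (Rmin (p1/2) (1/2))).
    assert (H2 := Rmin_r delta (Rmin (p1/2) (1/2))).
    assert (H3 := Rmin_l (p1/2) (1/2)). assert (H4 := Rmin_r (p1/2) (1/2)).
    assert (0 < Rmin delta (Rmin (p1/2) (1/2))).
    { apply Rmin_Rgt_r. split; [lra|]. apply Rmin_Rgt_r. lra. }
    lra. }
  destruct He2 as [He1 He2].
  assert (HA : h a0 e > e * (C - K)).
  { assert (Hm : h a0 (e/2) > h a0 e / 2).
    { assert (X := Hc0 0 e (1/2) ltac:(lra) ltac:(lra) ltac:(lra) ltac:(lra)).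
      replace (1/2 * 0 + (1 - 1/2) * e) with (e/2) in X by field. rewrite Hh00 in X. lra. }
    destruct (MVT_cor2 (h a0) (fun u => - f a0 u) (e/2) e) as [c [Hc Hcin]]; [lra| |].
    { intros c Hc. apply Hd0. lra. }
    assert (Hfc : f a0 c < - (C - K)) by (apply Hfd; lra).
    assert (- f a0 c * (e - e/2) > (C - K) * (e - e/2)).
    { apply Rmult_gt_compat_r; lra. }
    nra. }
  assert (HB : h a1 (p1 - e) - h a1 p1 > e * K).
  { set (t := 2 * e / p1).
    assert (Ht : 0 < t < 1).
    { unfold t. split; [apply Rdiv_lt_0_compat; lra|].
      apply (Rmult_lt_reg_r p1); [lra|]. unfold Rdiv. rewrite Rmult_assoc, Rinv_l; lra. }
    assert (X := Hc1 (p1/2) p1 t ltac:(lra) ltac:(lra) ltac:(lra) Ht).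
    replace (t * (p1/2) + (1 - t) * p1) with (p1 - e) in X by (unfold t; field; lra).
    replace (e * K) with (t * (h a1 (p1/2) - h a1 p1)) by (unfold t, K; field; lra).
    lra. }
  set (p := fun k => pstar k + ind a0 e k + ind a1 (- e) k).
  assert (Hdp : is_distr inA p).
  { split; [|split].
    - intro k. unfold p, ind. specialize (Hnn k).
      destruct (Nat.eqb_spec k a0), (Nat.eqb_spec k a1); subst; try lra.
      fold p1. lra.
    - intros k Hk. unfold p, ind.
      destruct (Nat.eqb_spec k a0), (Nat.eqb_spec k a1); subst; try congruence.
      rewrite Hout by auto. ring.
    - replace 1 with (1 + e + - e) by ring. apply isum_mod; auto. }
  set (istar' := istar + h a0 e + (h a1 (p1 - e) - h a1 p1)).
  set (e' := fun j => estar j + e * (H j a0 - H j a1)).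
  assert (Hobj : objective_is inA h n H theta p (istar' - fsum n (fun j => theta j * e' j))).
  { exists istar', e'. split; [|split]; auto.
    - unfold entropy_is, istar'.
      apply (isum_ext (fun k => (if inA k then h k (pstar k) else 0) + ind a0 (h a0 e) k
          + ind a1 (h a1 (p1 - e) - h a1 p1) k)).
      + intro k. unfold p, ind.
        destruct (Nat.eqb_spec k a0), (Nat.eqb_spec k a1); subst; try congruence.
        * rewrite Ha0, Hz, Hh00. replace (0 + e + 0) with e by ring. ring.
        * rewrite Ha1. fold p1. replace (p1 + 0 + - e) with (p1 - e) by ring. ring.
        * replace (pstar k + 0 + 0) with (pstar k) by ring. ring.
      + apply isum_mod; auto.
    - intros j Hj. unfold mean_is, e'.
      replace (estar j + e * (H j a0 - H j a1)) with
        (estar j + e * H j a0 + (- e * H j a1)) by ring.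
      apply (isum_ext (fun k => pstar k * H j k + ind a0 (e * H j a0) k + ind a1 (- e * H j a1) k)).
      + intro k. unfold p, ind.
        destruct (Nat.eqb_spec k a0), (Nat.eqb_spec k a1); subst; ring.
      + apply isum_mod. apply Hmean; auto. }
  assert (Hle2 := Hmax _ _ Hdp Hobj).
  unfold e' in Hle2. rewrite fsum_lin in Hle2. fold C in Hle2.
  unfold istar' in Hle2. rewrite Hv in Hle2.
  nra.
Qed.
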